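(* Let $(H,\mu_H,\Delta_H)$ be a bialgebra and $(A,\mu_A)$ a left $H$-module algebra in the usual sense, with action $h\otimes a\mapsto h\cdot a$. Let $\alpha_H:H\to H$ be a bijective bialgebra endomorphism and $\alpha_A:A\to A$ a bijective algebra endomorphism with $\alpha_A(h\cdot a)=\alpha_H(h)\cdot\alpha_A(a)$ for all $h\in H$, $a\in A$. Let $A\# H$ be the usual smash product, i.e. $A\otimes H$ with $(a\# h)(a'\# h')=a(h_1\cdot a')\# h_2h'$. Then $\alpha_A\otimes\alpha_H$ is an algebra endomorphism of $A\# H$, and the Hom-associative algebras $(A\# H)_{\alpha_A\otimes\alpha_H}$ and $A_{\alpha_A}\# H_{\alpha_H}$ coincide, where $A_{\alpha_A}\# H_{\alpha_H}$ is the Hom-smash product formed with respect to the action $h\triangleright a:=\alpha_A(h\cdot a)$ of the Hom-bialgebra $H_{\alpha_H}$ on $A_{\alpha_A}$.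
   Context: Algebras and coalgebras over a field $k$ are not assumed (co)unital; a bialgebra here is an associative algebra with a coassociative comultiplication $\Delta(h)=h_1\otimes h_2$ that is multiplicative; a left $H$-module algebra satisfies $(hh')\cdot a=h\cdot(h'\cdot a)$ and $h\cdot(aa')=(h_1\cdot a)(h_2\cdot a')$. For an associative algebra $(A,\mu)$ with algebra endomorphism $\alpha$, $A_\alpha=(A,\alpha\circ\mu,\alpha)$ (a Hom-associative algebra: $\alpha(aa')=\alpha(a)\alpha(a')$, $\alpha(a)(a'a'')=(aa')\alpha(a'')$). $H_{\alpha_H}=(H,\alpha_H\circ\mu_H,\Delta_H\circ\alpha_H,\alpha_H)$ is a Hom-bialgebra, and $A_{\alpha_A}$ is a left $H_{\alpha_H}$-module Hom-algebra via $\triangleright$ (known facts). For a Hom-bialgebra $(H,\mu_H,\Delta_H,\alpha_H)$ with $\Delta_H(h)=h_1\otimes h_2$ and a left $H$-module Hom-algebra $(A,\mu_A,\alpha_A)$ with action $\cdot$ and $\alpha_H,\alpha_A$ bijective, the Hom-smash product $A\# H$ is $A\otimes H$ with structure map $\alpha_A\otimes\alpha_H$ and multiplication $(a\# h)(a'\# h')=a(\alpha_H^{-2}(h_1)\cdot\alpha_A^{-1}(a'))\#\alpha_H^{-1}(h_2)h'$ (a Hom-associative algebra). *)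

(* Defs.v *)
(* Vector spaces over a field k are lmodType k; (co)algebras are
   NOT assumed (co)unital, so multiplications are plain bilinear maps.
   Tensor products are given by their universal property (is_tensor), and
   linear maps out of a tensor product are obtained with tlift. *)
From HB Require Import structures.
From mathcomp Require Import all_boot all_algebra.
From Stdlib Require Import ClassicalEpsilon.
Set Implicit Arguments. Unset Strict Implicit. Unset Printing Implicit Defensive.
Import GRing.Theory.
Local Open Scope ring_scope.

Definition is_bilin (k : fieldType) (U V W : lmodType k) (f : U -> V -> W) : Prop :=
  (forall v, linear (fun u => f u v)) /\ (forall u, linear (f u)).

Definition is_tensor (k : fieldType) (U V T : lmodType k) (t : U -> V -> T) : Prop :=
  is_bilin t /\
  forall (W : lmodType k) (f : U -> V -> W), is_bilin f ->
    exists g : T -> W, [/\ linear g, (forall u v, g (t u v) = f u v) &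
      forall g' : T -> W, linear g' -> (forall u v, g' (t u v) = f u v) -> g' =1 g].

Definition tlift (k : fieldType) (U V T W : lmodType k) (t : U -> V -> T)
  (f : U -> V -> W) : T -> W :=
  epsilon (inhabits (fun _ : T => (0 : W)))
    (fun g => linear g /\ forall u v, g (t u v) = f u v).

Definition tmap (k : fieldType) (U V T U' V' T' : lmodType k) (t : U -> V -> T)
  (t' : U' -> V' -> T') (f : U -> U') (g : V -> V') : T -> T' :=
  tlift t (fun u v => t' (f u) (g v)).

Definition is_algebra (k : fieldType) (A : lmodType k) (mu : A -> A -> A) : Prop :=
  is_bilin mu /\ associative mu.

Definition tensor_mul (k : fieldType) (H HH : lmodType k) (tHH : H -> H -> HH)
  (muH : H -> H -> H) : HH -> HH -> HH :=
  fun s s' => tlift tHH (fun x y => tlift tHH (fun x' y' => tHH (muH x x') (muH y y')) s') s.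

Definition is_bialgebra (k : fieldType) (H HH HHH : lmodType k)
  (tHH : H -> H -> HH) (tHHH : HH -> H -> HHH)
  (muH : H -> H -> H) (Delta : H -> HH) : Prop :=
  [/\ is_algebra muH, linear Delta,
   (* coassociativity (Delta (x) id) Delta = assoc o (id (x) Delta) Delta *)
   (forall h, tlift tHH (fun x y => tHHH (Delta x) y) (Delta h) =
              tlift tHH (fun x y => tlift tHH (fun z w => tHHH (tHH x z) w) (Delta y)) (Delta h))
   & (forall h h', Delta (muH h h') = tensor_mul tHH muH (Delta h) (Delta h'))].

Definition is_module_algebra (k : fieldType) (H HH A : lmodType k)
  (tHH : H -> H -> HH) (muH : H -> H -> H) (Delta : H -> HH)
  (muA : A -> A -> A) (act : H -> A -> A) : Prop :=
  [/\ is_bilin act,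
   (forall h h' a, act (muH h h') a = act h (act h' a)) &
   (forall h a a', act h (muA a a') =
      tlift tHH (fun x y => muA (act x a) (act y a')) (Delta h))].

Definition smash_mul (k : fieldType) (H HH A AH : lmodType k)
  (tHH : H -> H -> HH) (tAH : A -> H -> AH)
  (muA : A -> A -> A) (muH : H -> H -> H) (Delta : H -> HH) (act : H -> A -> A)
  : AH -> AH -> AH :=
  fun s s' => tlift tAH (fun a h => tlift tAH (fun a' h' =>
     tlift tHH (fun x y => tAH (muA a (act x a')) (muH y h')) (Delta h)) s') s.

(* Hom-smash product: (a#h)(a'#h') = a(alH^-2(h_1).alA^-1(a')) # alH^-1(h_2) h',
   alAi, alHi being the inverses of the structure maps alA, alH *)
Definition hom_smash_mul (k : fieldType) (H HH A AH : lmodType k)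
  (tHH : H -> H -> HH) (tAH : A -> H -> AH)
  (muA : A -> A -> A) (muH : H -> H -> H) (Delta : H -> HH) (act : H -> A -> A)
  (alAi : A -> A) (alHi : H -> H) : AH -> AH -> AH :=
  fun s s' => tlift tAH (fun a h => tlift tAH (fun a' h' =>
     tlift tHH (fun x y => tAH (muA a (act (alHi (alHi x)) (alAi a')))
                               (muH (alHi y) h')) (Delta h)) s') s.

(* B_alpha = (B, alpha o mu, alpha): its multiplication *)
Definition twist_mul (T : Type) (alpha : T -> T) (mu : T -> T -> T) : T -> T -> T :=
  fun x y => alpha (mu x y).

Definition twist_comul (H HH : Type) (Delta : H -> HH) (alpha : H -> H) : H -> HH :=
  fun h => Delta (alpha h).

Definition hom_action (H A : Type) (alA : A -> A) (act : H -> A -> A) : H -> A -> A :=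
  fun h a => alA (act h a).

(* Main.v *)
Require Import Defs.
From HB Require Import structures.
From mathcomp Require Import all_boot all_algebra.
From Stdlib Require Import ClassicalEpsilon.
Set Implicit Arguments. Unset Strict Implicit. Unset Printing Implicit Defensive.
Import GRing.Theory.
Local Open Scope ring_scope.

Section Gen.
Variable k : fieldType.

Lemma tlift_spec (U V T W : lmodType k) (t : U -> V -> T) (f : U -> V -> W) :
  is_tensor t -> is_bilin f ->
  linear (tlift t f) /\ forall u v, tlift t f (t u v) = f u v.
Proof.
move=> [_ Ht] Hf; rewrite /tlift.
apply: (epsilon_spec (inhabits (fun _ : T => (0 : W)))
   (fun g => linear g /\ forall u v, g (t u v) = f u v)).
have [g [g1 g2 _]] := Ht W f Hf; by exists g.
Qed.

Lemma tlift_lin (U V T W : lmodType k) (t : U -> V -> T) (f : U -> V -> W) :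
  is_tensor t -> is_bilin f -> linear (tlift t f).
Proof. by move=> a b; case: (tlift_spec a b). Qed.

Lemma tlift_t (U V T W : lmodType k) (t : U -> V -> T) (f : U -> V -> W) u v :
  is_tensor t -> is_bilin f -> tlift t f (t u v) = f u v.
Proof. by move=> a b; case: (tlift_spec a b). Qed.

Lemma lin_comp (U V W : lmodType k) (g : V -> W) (f : U -> V) :
  linear g -> linear f -> linear (fun x => g (f x)).
Proof. by move=> Hg Hf c u v; rewrite Hf Hg. Qed.

Lemma bilin_comp (U V W W' : lmodType k) (f : U -> V -> W) (g : W -> W') :
  is_bilin f -> linear g -> is_bilin (fun u v => g (f u v)).
Proof.
by move=> [H1 H2] Hg; split=> x; apply: lin_comp.
Qed.

Lemma bilin_pre (U V U' V' W : lmodType k) (f : U -> V -> W) (p : U' -> U) (q : V' -> V) :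
  is_bilin f -> linear p -> linear q -> is_bilin (fun u v => f (p u) (q v)).
Proof.
move=> [H1 H2] Hp Hq; split=> x.
  exact: (lin_comp (H1 (q x)) Hp).
exact: (lin_comp (H2 (p x)) Hq).
Qed.

Lemma tensor_ext (U V T W : lmodType k) (t : U -> V -> T) (g1 g2 : T -> W) :
  is_tensor t -> linear g1 -> linear g2 -> (forall u v, g1 (t u v) = g2 (t u v)) ->
  forall x, g1 x = g2 x.
Proof.
move=> Ht L1 L2 E x.
have Hb : is_bilin (fun u v => g1 (t u v)) by apply: bilin_comp; [case: Ht|].
have [_ Hu] := Ht; have [g [_ _ Hg]] := Hu W _ Hb.
rewrite (Hg g1 L1 (fun _ _ => erefl)) (Hg g2 L2); first by [].
by move=> u v; rewrite E.
Qed.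

Lemma tlift_lin_arg (P U V T W : lmodType k) (t : U -> V -> T) (f : P -> U -> V -> W) :
  is_tensor t -> (forall p, is_bilin (f p)) -> (forall u v, linear (fun p => f p u v)) ->
  forall x, linear (fun p => tlift t (f p) x).
Proof.
move=> Ht Hb Hl x c p1 p2.
have L : linear (fun x => c *: tlift t (f p1) x + tlift t (f p2) x).
  move=> d u v; rewrite !(tlift_lin Ht (Hb _)) scalerDr.
  by rewrite scalerDr !scalerA mulrC addrACA.
apply: (tensor_ext Ht (tlift_lin Ht (Hb _)) L) => u v.
by rewrite !tlift_t // Hl.
Qed.

Lemma inv_lin (U : lmodType k) (f g : U -> U) :
  linear f -> cancel f g -> cancel g f -> linear g.
Proof.
move=> Hf c1 c2 c u v.
by rewrite -{1}(c2 u) -{1}(c2 v) -Hf c1.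
Qed.

Variables (H HH A AH : lmodType k) (tHH : H -> H -> HH) (tAH : A -> H -> AH).

Definition nest (D : H -> HH) (Q : A -> A -> H -> H -> H -> AH) (s s' : AH) : AH :=
  tlift tAH (fun a h => tlift tAH (fun a' h' =>
     tlift tHH (fun x y => Q a a' h' x y) (D h)) s') s.

Hypotheses (HtHH : is_tensor tHH) (HtAH : is_tensor tAH).
Variables (D : H -> HH) (Q : A -> A -> H -> H -> H -> AH).
Hypotheses (HD : linear D)
  (Q1 : forall a' h' x y, linear (fun a => Q a a' h' x y))
  (Q2 : forall a h' x y, linear (fun a' => Q a a' h' x y))
  (Q3 : forall a a' x y, linear (fun h' => Q a a' h' x y))
  (Q4 : forall a a' h' y, linear (fun x => Q a a' h' x y))
  (Q5 : forall a a' h' x, linear (fun y => Q a a' h' x y)).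

Let Qb a a' h' : is_bilin (Q a a' h') := conj (fun y => Q4 a a' h' y) (Q5 a a' h').

Let B2 a h : is_bilin (fun a' h' => tlift tHH (fun x y => Q a a' h' x y) (D h)).
Proof.
split=> [h'|a'].
  by apply: (tlift_lin_arg (f := fun a' => Q a a' h')) => // u v; apply: Q2.
by apply: (tlift_lin_arg (f := fun h' => Q a a' h')) => // u v; apply: Q3.
Qed.

Let B4 s' : is_bilin (fun a h => tlift tAH (fun a' h' =>
     tlift tHH (fun x y => Q a a' h' x y) (D h)) s').
Proof.
split=> [h|a].
  apply: (tlift_lin_arg (f := fun a a' h' => tlift tHH (fun x y => Q a a' h' x y) (D h))) => //.
  move=> a' h'; apply: (tlift_lin_arg (f := fun a => Q a a' h')) => // u v; apply: Q1.
apply: (tlift_lin_arg (f := fun h a' h' => tlift tHH (fun x y => Q a a' h' x y) (D h))) => //.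
move=> a' h'; exact: (lin_comp (tlift_lin HtHH (Qb a a' h')) HD).
Qed.

Lemma nest_lin1 s' : linear (fun s => nest D Q s s').
Proof. exact: (tlift_lin HtAH (B4 s')). Qed.

Lemma nest_lin2 s : linear (fun s' => nest D Q s s').
Proof.
apply: (tlift_lin_arg (f := fun s' a h => tlift tAH (fun a' h' =>
     tlift tHH (fun x y => Q a a' h' x y) (D h)) s')) => // a h.
exact: (tlift_lin HtAH (B2 a h)).
Qed.

Lemma nest_t a h a' h' :
  nest D Q (tAH a h) (tAH a' h') = tlift tHH (fun x y => Q a a' h' x y) (D h).
Proof. by rewrite /nest tlift_t // tlift_t. Qed.

End Gen.

Theorem proposition3p3 (k : fieldType) (H HH HHH A AH : lmodType k)
  (tHH : H -> H -> HH) (tHHH : HH -> H -> HHH) (tAH : A -> H -> AH)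
  (muH : H -> H -> H) (Delta : H -> HH) (muA : A -> A -> A) (act : H -> A -> A)
  (alH alHi : H -> H) (alA alAi : A -> A) :
  is_tensor tHH -> is_tensor tHHH -> is_tensor tAH ->
  is_bialgebra tHH tHHH muH Delta ->
  is_algebra muA ->
  is_module_algebra tHH muH Delta muA act ->
  (* alH : bijective bialgebra endomorphism *)
  linear alH -> cancel alH alHi -> cancel alHi alH ->
  (forall h h', alH (muH h h') = muH (alH h) (alH h')) ->
  (forall h, Delta (alH h) = tmap tHH tHH alH alH (Delta h)) ->
  (* alA : bijective algebra endomorphism *)
  linear alA -> cancel alA alAi -> cancel alAi alA ->
  (forall a a', alA (muA a a') = muA (alA a) (alA a')) ->
  (forall h a, alA (act h a) = act (alH h) (alA a)) ->
  let alAH := tmap tAH tAH alA alH in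
  let smash := smash_mul tHH tAH muA muH Delta act in
  (linear alAH /\ forall s s', alAH (smash s s') = smash (alAH s) (alAH s')) /\
  (forall s s', twist_mul alAH smash s s' =
     hom_smash_mul tHH tAH (twist_mul alA muA) (twist_mul alH muH)
       (twist_comul Delta alH) (hom_action alA act) alAi alHi s s').
Proof.
move=> HtHH _ HtAH [[muHb _] HD _ _] [muAb _] [actb _ _] LH cH1 cH2 alHM alHD
  LA cA1 cA2 alAM alAact alAH smash.
have LHi := inv_lin LH cH1 cH2; have LAi := inv_lin LA cA1 cA2.
have tAHb : is_bilin tAH by case: HtAH.
have tHHb : is_bilin tHH by case: HtHH.
have tAHl : forall c u u' v, tAH (c *: u + u') v = c *: tAH u v + tAH u' v.
  by move=> *; apply tAHb.1.
have tAHr : forall c u v v', tAH u (c *: v + v') = c *: tAH u v + tAH u v'.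
  by move=> *; apply tAHb.2.
have muAl : forall c u u' v, muA (c *: u + u') v = c *: muA u v + muA u' v.
  by move=> *; apply muAb.1.
have muAr : forall c u v v', muA u (c *: v + v') = c *: muA u v + muA u v'.
  by move=> *; apply muAb.2.
have muHl : forall c u u' v, muH (c *: u + u') v = c *: muH u v + muH u' v.
  by move=> *; apply muHb.1.
have muHr : forall c u v v', muH u (c *: v + v') = c *: muH u v + muH u v'.
  by move=> *; apply muHb.2.
have actl : forall c u u' v, act (c *: u + u') v = c *: act u v + act u' v.
  by move=> *; apply actb.1.
have actr : forall c u v v', act u (c *: v + v') = c *: act u v + act u v'.
  by move=> *; apply actb.2.
have Bm : is_bilin (fun u v => tAH (alA u) (alH v)) by apply: bilin_pre.
have LalAH : linear alAH by apply: tlift_lin.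
have alAH_t : forall a h, alAH (tAH a h) = tAH (alA a) (alH h).
  by move=> a h; rewrite /alAH /tmap tlift_t.
have BmH : is_bilin (fun u v => tHH (alH u) (alH v)) by apply: bilin_pre.
have Ltm : linear (tmap tHH tHH alH alH) by apply: tlift_lin.
have tm_t : forall x y, tmap tHH tHH alH alH (tHH x y) = tHH (alH x) (alH y).
  by move=> x y; rewrite /tmap tlift_t.
pose Q a a' h' x y := tAH (muA a (act x a')) (muH y h').
have Es : forall s s', smash s s' = nest tHH tAH Delta Q s s' by [].
have Q1 : forall a' h' x y, linear (fun a => Q a a' h' x y).
  by move=> *; move=> c u v; rewrite /Q muAl tAHl.
have Q2 : forall a h' x y, linear (fun a' => Q a a' h' x y).
  by move=> *; move=> c u v; rewrite /Q actr muAr tAHl.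
have Q3 : forall a a' x y, linear (fun h' => Q a a' h' x y).
  by move=> *; move=> c u v; rewrite /Q muHr tAHr.
have Q4 : forall a a' h' y, linear (fun x => Q a a' h' x y).
  by move=> *; move=> c u v; rewrite /Q actl muAr tAHl.
have Q5 : forall a a' h' x, linear (fun y => Q a a' h' x y).
  by move=> *; move=> c u v; rewrite /Q muHl tAHr.
have Qb : forall a a' h', is_bilin (Q a a' h') by move=> *; split.
have NL1 := nest_lin1 HtHH HtAH HD Q1 Q2 Q3 Q4 Q5.
have NL2 := nest_lin2 HtHH HtAH HD Q1 Q2 Q3 Q4 Q5.
have Nt := nest_t HtHH HtAH HD Q1 Q2 Q3 Q4 Q5.
pose K a a' h' x y := tAH (alA (muA a (act (alHi x) a'))) (alH (muH (alHi y) h')).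
have Kb : forall a a' h', is_bilin (K a a' h').
  move=> a a' h'; split=> [y|x] c u v; first by rewrite /K LHi actl muAr LA tAHl.
  by rewrite /K LHi muHl LH tAHr.
have key : forall a h a' h', alAH (tlift tHH (fun x y => Q a a' h' x y) (Delta h)) =
   tlift tHH (K a a' h') (tmap tHH tHH alH alH (Delta h)).
  move=> a h a' h'.
  move: (Delta h); apply: (tensor_ext HtHH
    (g1 := fun z => alAH (tlift tHH (fun x y => Q a a' h' x y) z))
    (g2 := fun z => tlift tHH (K a a' h') (tmap tHH tHH alH alH z))).
  - exact: (lin_comp LalAH (tlift_lin HtHH (Qb a a' h'))).
  - exact: (lin_comp (tlift_lin HtHH (Kb a a' h')) Ltm).
  by move=> x y; rewrite tm_t !tlift_t // /K !cH1 alAH_t.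
have tl_ext : forall (f1 f2 : H -> H -> AH), is_bilin f1 -> is_bilin f2 ->
    (forall x y, f1 x y = f2 x y) -> forall z, tlift tHH f1 z = tlift tHH f2 z.
  move=> f1 f2 B1 B2 E; apply: (tensor_ext HtHH); try exact: tlift_lin.
  by move=> x y; rewrite !tlift_t.
split.
  split=> // s s'; rewrite !Es.
  move: s; apply: (tensor_ext HtAH (g1 := fun s => alAH (nest tHH tAH Delta Q s s'))
     (g2 := fun s => nest tHH tAH Delta Q (alAH s) (alAH s'))).
  - exact: (lin_comp LalAH (NL1 s')).
  - exact: (lin_comp (NL1 _) LalAH).
  move=> a h; move: s'.
  apply: (tensor_ext HtAH (g1 := fun s' => alAH (nest tHH tAH Delta Q (tAH a h) s'))
     (g2 := fun s' => nest tHH tAH Delta Q (alAH (tAH a h)) (alAH s'))).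
  - exact: (lin_comp LalAH (NL2 _)).
  - exact: (lin_comp (NL2 _) LalAH).
  move=> a' h'; rewrite !alAH_t !Nt key alHD.
  apply: tl_ext; [exact: Kb | exact: Qb |].
  by move=> x y; rewrite /K /Q alAM alAact alHM !cH2.
pose Q' a a' h' x y := tAH (twist_mul alA muA a (hom_action alA act (alHi (alHi x)) (alAi a')))
  (twist_mul alH muH (alHi y) h').
pose D' := twist_comul Delta alH.
have HD' : linear D' by exact: (lin_comp HD LH).
have Eh : forall s s', hom_smash_mul tHH tAH (twist_mul alA muA) (twist_mul alH muH)
    (twist_comul Delta alH) (hom_action alA act) alAi alHi s s' = nest tHH tAH D' Q' s s' by [].
have R1 : forall a' h' x y, linear (fun a => Q' a a' h' x y).
  by move=> *; move=> c u v; rewrite /Q' /twist_mul /hom_action muAl LA tAHl.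
have R2 : forall a h' x y, linear (fun a' => Q' a a' h' x y).
  by move=> *; move=> c u v; rewrite /Q' /twist_mul /hom_action LAi actr LA muAr LA tAHl.
have R3 : forall a a' x y, linear (fun h' => Q' a a' h' x y).
  by move=> *; move=> c u v; rewrite /Q' /twist_mul /hom_action muHr LH tAHr.
have R4 : forall a a' h' y, linear (fun x => Q' a a' h' x y).
  by move=> *; move=> c u v; rewrite /Q' /twist_mul /hom_action !LHi actl LA muAr LA tAHl.
have R5 : forall a a' h' x, linear (fun y => Q' a a' h' x y).
  by move=> *; move=> c u v; rewrite /Q' /twist_mul /hom_action LHi muHl LH tAHr.
have Rb : forall a a' h', is_bilin (Q' a a' h') by move=> *; split.
have ML1 := nest_lin1 HtHH HtAH HD' R1 R2 R3 R4 R5.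
have ML2 := nest_lin2 HtHH HtAH HD' R1 R2 R3 R4 R5.
have Mt := nest_t HtHH HtAH HD' R1 R2 R3 R4 R5.
move=> s s'; rewrite Eh /twist_mul Es.
move: s; apply: (tensor_ext HtAH (g1 := fun s => alAH (nest tHH tAH Delta Q s s'))
   (g2 := fun s => nest tHH tAH D' Q' s s')).
- exact: (lin_comp LalAH (NL1 s')).
- exact: ML1.
move=> a h; move: s'.
apply: (tensor_ext HtAH (g1 := fun s' => alAH (nest tHH tAH Delta Q (tAH a h) s'))
   (g2 := fun s' => nest tHH tAH D' Q' (tAH a h) s')).
- exact: (lin_comp LalAH (NL2 _)).
- exact: ML2.
move=> a' h'; rewrite Nt Mt key /D' /twist_comul alHD.
apply: tl_ext; [exact: Kb | exact: Rb |].
by move=> x y; rewrite /K /Q' /twist_mul /hom_action alAact !cH2 cA2.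
Qed.
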